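(* Let $\mathcal{X}\subseteq\mathbb{R}^d$ be closed and convex, $\mu,\sigma,\delta>0$. Let $h:\mathcal{X}\to\mathbb{R}$ be continuously differentiable with $D_h(x,y)\ge\frac\sigma2\|x-y\|^2$ for all $x,y$, and let $f:\mathcal{X}\to\mathbb{R}$ be differentiable and $\mu$-uniformly convex with respect to $h$ (i.e. $D_f(x,y)\ge\mu D_h(x,y)$ for all $x,y$), with minimizer $x^\ast$. Let $(A_k)_{k\ge0}$ be a nondecreasing sequence of positive numbers, $\alpha_k=A_{k+1}-A_k$, $\tau_k=\alpha_k/A_k$, and $E_k=A_k\big(\mu D_h(x^\ast,z_k)+f(x_k)-f(x^\ast)\big)$. Suppose sequences $(x_k),(z_k)$ in $\mathcal{X}$ satisfy, for all $k$, $$x_{k+1}=\frac{\tau_k}{1+\tau_k}z_k+\frac1{1+\tau_k}x_k,\qquad \nabla h(z_{k+1})=\nabla h(z_k)+\tau_k\Big(\nabla h(x_{k+1})-\nabla h(z_{k+1})-\frac1\mu\nabla f(x_{k+1})\Big).$$ Then $$\frac{E_{k+1}-E_k}{\delta}\le\frac{A_k\tau_k^2}{2\mu\sigma\delta}\|\nabla f(x_{k+1})\|^2.$$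
   Context: $\|\cdot\|$ is the Euclidean norm; for differentiable $g$, $D_g(y,x)=g(y)-g(x)-\langle\nabla g(x),y-x\rangle$. *)

(* Defs.v *)
From HB Require Import structures.
From mathcomp Require Import all_boot all_order all_algebra.
From mathcomp Require Import all_classical all_reals all_analysis.
Set Implicit Arguments. Unset Strict Implicit. Unset Printing Implicit Defensive.
Import Order.TTheory GRing.Theory Num.Theory.
Import numFieldNormedType.Exports.
Local Open Scope classical_set_scope.
Local Open Scope ring_scope.

(* Euclidean inner product and Euclidean norm on R^d
   (NB: the library norm on matrices is the max-norm, so we do not use it). *)
Definition dotv {R : realType} {d : nat} (u v : 'rV[R]_d) : R :=
  \sum_(i < d) u ord0 i * v ord0 i.
Definition enorm {R : realType} {d : nat} (u : 'rV[R]_d) : R :=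
  Num.sqrt (dotv u u).

Definition is_gradient_at {R : realType} {d : nat}
  (f : 'rV[R]_d -> R) (g : 'rV[R]_d -> 'rV[R]_d) (x : 'rV[R]_d) : Prop :=
  differentiable f x /\ forall v : 'rV[R]_d, 'd f x v = dotv (g x) v.

Definition bregman {R : realType} {d : nat}
  (g : 'rV[R]_d -> R) (gradg : 'rV[R]_d -> 'rV[R]_d) (y x : 'rV[R]_d) : R :=
  g y - g x - dotv (gradg x) (y - x).

(* Main.v *)
Require Import Defs.
From HB Require Import structures.
From mathcomp Require Import all_boot all_order all_algebra.
From mathcomp Require Import all_classical all_reals all_analysis.
From mathcomp Require Import ring lra.
Import Order.TTheory GRing.Theory Num.Theory.
Import numFieldNormedType.Exports.
Local Open Scope ring_scope.
Set Implicit Arguments.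
Section S.
Variables (R : realType) (d : nat).
Implicit Types u v w : 'rV[R]_d.
Lemma dotvDl u v w : dotv (u + v) w = dotv u w + dotv v w.
Proof. rewrite /dotv -big_split; apply eq_bigr => i _; by rewrite mxE mulrDl. Qed.
Lemma dotvC u v : dotv u v = dotv v u.
Proof. rewrite /dotv; apply eq_bigr => i _; by rewrite mulrC. Qed.
Lemma dotvDr u v w : dotv w (u + v) = dotv w u + dotv w v.
Proof. by rewrite dotvC dotvDl !(dotvC w). Qed.
Lemma dotvZl (a : R) u v : dotv (a *: u) v = a * dotv u v.
Proof. rewrite /dotv mulr_sumr; apply eq_bigr => i _; by rewrite mxE mulrA. Qed.
Lemma dotvZr (a : R) u v : dotv v (a *: u) = a * dotv v u.
Proof. by rewrite dotvC dotvZl dotvC. Qed.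
Lemma dotvNl u v : dotv (- u) v = - dotv u v.
Proof. by rewrite -scaleN1r dotvZl mulN1r. Qed.
Lemma dotvNr u v : dotv v (- u) = - dotv v u.
Proof. by rewrite dotvC dotvNl dotvC. Qed.
Lemma dotvBl u v w : dotv (u - v) w = dotv u w - dotv v w.
Proof. by rewrite dotvDl dotvNl. Qed.
Lemma dotvBr u v w : dotv w (u - v) = dotv w u - dotv w v.
Proof. by rewrite dotvDr dotvNr. Qed.
Lemma dotv_ge0 u : 0 <= dotv u u.
Proof. apply: sumr_ge0 => i _; by rewrite -expr2 sqr_ge0. Qed.
Lemma enorm_sq u : enorm u ^+ 2 = dotv u u.
Proof. by rewrite /enorm sqr_sqrtr // dotv_ge0. Qed.
Lemma three_point (g : 'rV[R]_d -> R) G a b c :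
  bregman g G a b + bregman g G b c - bregman g G a c = dotv (G c - G b) (a - b).
Proof. rewrite /bregman !(dotvBl, dotvBr); lra. Qed.
End S.
Local Open Scope classical_set_scope.
Theorem proposition8 (R : realType) (d : nat) (X : set 'rV[R]_d)
  (mu sigma delta : R)
  (h f : 'rV[R]_d -> R) (gradh gradf : 'rV[R]_d -> 'rV[R]_d)
  (xstar : 'rV[R]_d) (A : nat -> R) (x z : nat -> 'rV[R]_d) :
  closed X -> convex_set X ->
  0 < mu -> 0 < sigma -> 0 < delta ->
  (* h continuously differentiable on X *)
  (forall y, X y -> is_gradient_at h gradh y) ->
  {within X, continuous gradh} ->
  (forall y w, X y -> X w ->
     bregman h gradh y w >= sigma / 2 * enorm (y - w) ^+ 2) ->
  (* f differentiable on X and mu-uniformly convex w.r.t. h *)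
  (forall y, X y -> is_gradient_at f gradf y) ->
  (forall y w, X y -> X w -> bregman f gradf y w >= mu * bregman h gradh y w) ->
  (* xstar is a minimizer of f on X *)
  X xstar -> (forall y, X y -> f xstar <= f y) ->
  (* (A_k) positive nondecreasing *)
  (forall k, 0 < A k) -> (forall k, A k <= A k.+1) ->
  (forall k, X (x k)) -> (forall k, X (z k)) ->
  (forall k, let tau := (A k.+1 - A k) / A k in
     x k.+1 = (tau / (1 + tau)) *: z k + (1 / (1 + tau)) *: x k) ->
  (forall k, let tau := (A k.+1 - A k) / A k in
     gradh (z k.+1) = gradh (z k)
       + tau *: (gradh (x k.+1) - gradh (z k.+1) - mu^-1 *: gradf (x k.+1))) ->
  forall k,
    let alpha := A k.+1 - A k in
    let tau := alpha / A k in
    let E := fun j => A j * (mu * bregman h gradh xstar (z j) + f (x j) - f xstar) in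
    (E k.+1 - E k) / delta
      <= A k * tau ^+ 2 / (2 * mu * sigma * delta) * enorm (gradf (x k.+1)) ^+ 2.
Proof.
move=> _ _ mu0 sig0 del0 _ _ hsig _ fconv Xs _ A0 Amono Xx Xz xup zup k.
rewrite [in X in is_true X]/=.
set tau := (A k.+1 - A k) / A k.
have tau0 : 0 <= tau by rewrite /tau divr_ge0 ?subr_ge0 // ltW.
have Ak0 : A k != 0 by rewrite gt_eqF.
have Aeq : A k.+1 = A k * (1 + tau) by rewrite /tau; field.
set x1 := x k.+1; set z1 := z k.+1; set g := gradf x1.
set Dsz1 := bregman h gradh xstar z1; set Dsz := bregman h gradh xstar (z k).
set Dz1z := bregman h gradh z1 (z k); set Dz1x1 := bregman h gradh z1 x1.
set Dsx1 := bregman h gradh xstar x1; set Dxx1 := bregman h gradh (x k) x1.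
set Q := dotv (gradh (z k) - gradh z1) (xstar - z1).
set P := dotv (gradh x1 - gradh z1) (xstar - z1).
have T1 : Dsz1 + Dz1z - Dsz = Q by exact: three_point.
have T2 : Dsz1 + Dz1x1 - Dsx1 = P by exact: three_point.
have U : mu * Q = - tau * mu * P + tau * (dotv g xstar - dotv g z1).
  have E1 : gradh (z k) - gradh z1 = - (tau *: (gradh x1 - gradh z1 - mu^-1 *: g)).
    rewrite /z1; move: (zup k) => /= Hz; rewrite {1}Hz opprD addrA subrr add0r; by [].
  rewrite /Q E1 /P !(dotvBl, dotvBr, dotvZl, dotvNl, dotvZr, dotvNr).
  by field; rewrite gt_eqF.
have C1 := fconv xstar x1 Xs (Xx _).
have C2 := fconv (x k) x1 (Xx _) (Xx _).
have P1 := hsig z1 x1 (Xz _) (Xx _).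
have P2 := hsig (x k) x1 (Xx _) (Xx _).
have P3 := hsig z1 (z k) (Xz _) (Xz _).
rewrite -/Dz1x1 -/Dxx1 -/Dz1z in P1 P2 P3.
rewrite -/Dsx1 -/Dxx1 /bregman -/g !dotvBr in C1 C2.
rewrite enorm_sq in P3.
have sq0 : forall u : 'rV[R]_d, 0 <= sigma / 2 * enorm u ^+ 2.
  by move=> u; rewrite mulr_ge0 ?divr_ge0 ?sqr_ge0 // ltW.
have Dz1x10 : 0 <= Dz1x1 := le_trans (sq0 _) P1.
have Dxx10 : 0 <= Dxx1 := le_trans (sq0 _) P2.
have Xrel : (1 + tau) * dotv g x1 = tau * dotv g (z k) + dotv g (x k).
  have t1 : 1 + tau != 0 by rewrite gt_eqF // ltr_pwDl.
  rewrite /x1 xup -/tau dotvDr !dotvZr; field.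
  by [].
have Y := @dotv_ge0 _ _ (tau *: g - (mu * sigma) *: (z k - z1)).
rewrite !(dotvBl, dotvBr, dotvZl, dotvZr) in Y P3.
rewrite (@dotvC _ _ (z k) g) (@dotvC _ _ z1 g) in Y.
rewrite (@dotvC _ _ (z k) z1) in Y P3.
have key : (2 * mu * sigma) * ((1 + tau) * (mu * Dsz1 + f x1 - f xstar)
   - (mu * Dsz + f (x k) - f xstar)) <= tau ^+ 2 * dotv g g.
  have e1 : mu*Dsz1 + mu*Dz1z - mu*Dsz = mu*Q by rewrite -T1; ring.
  have e2 : tau*mu*Dsz1 + tau*mu*Dz1x1 - tau*mu*Dsx1 = tau*mu*P by rewrite -T2; ring.
  have i1 := ler_wpM2l tau0 C1.
  have i2 : 0 <= tau*mu*Dz1x1 by apply: mulr_ge0 => //; apply: mulr_ge0 => //; apply: ltW.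
  have i0 : 0 <= mu*Dxx1 by apply: mulr_ge0 => //; apply: ltW.
  have K1 : (1 + tau) * (mu * Dsz1 + f x1 - f xstar) - (mu * Dsz + f (x k) - f xstar)
     <= - (mu * Dz1z) + tau * (dotv g (z k) - dotv g z1).
    lra.
  have pms : 0 <= 2 * mu * sigma by apply: mulr_ge0; [apply: mulr_ge0 => //; apply: ltW | apply: ltW].
  have K2 := ler_wpM2l pms K1.
  have i3 := ler_wpM2l pms (ler_wpM2l (ltW mu0) P3).
  lra.
have pms' : 0 < 2 * mu * sigma by rewrite !mulr_gt0.
have K' : (1 + tau) * (mu * Dsz1 + f x1 - f xstar) - (mu * Dsz + f (x k) - f xstar)
   <= (2 * mu * sigma)^-1 * (tau ^+ 2 * dotv g g) by rewrite ler_pdivlMl.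
rewrite enorm_sq.
have m1 : mu != 0 by rewrite gt_eqF.
have s1 : sigma != 0 by rewrite gt_eqF.
have d1 : delta != 0 by rewrite gt_eqF.
have eqL : (A k.+1 * (mu * Dsz1 + f x1 - f xstar) - A k * (mu * Dsz + f (x k) - f xstar)) / delta
  = A k / delta * ((1 + tau) * (mu * Dsz1 + f x1 - f xstar) - (mu * Dsz + f (x k) - f xstar)).
  by rewrite Aeq; field.
have eqR : A k * tau ^+ 2 / (2 * mu * sigma * delta) * dotv g g
  = A k / delta * ((2 * mu * sigma)^-1 * (tau ^+ 2 * dotv g g)).
  field; rewrite m1 s1 d1 /=; by [].
rewrite eqL eqR; apply: ler_wpM2l => //.
by rewrite divr_ge0 // ltW.
Qed.
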